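(* Let $\mu$ be a probability measure on $\partial\mathbb{D}$ and $\{\Phi_n\}_{n=0}^N$ its monic orthogonal polynomials, where $N=\infty$ if $\mu$ has infinite support and $N=\#\mathrm{supp}(\mu)$ otherwise. Let $z_0$ be an isolated point of $\mathrm{supp}(\mu)$ and $d=\mathrm{dist}(z_0,\mathrm{supp}(\mu)\setminus\{z_0\})$. Then for each $n<N$, the disk $\{z:|z-z_0|<d^2/4\}$ contains at most one zero of $\Phi_n$.
   Context: $\Phi_n$ is the monic polynomial of degree $n$ orthogonal in $L^2(\mu)$ to all polynomials of degree less than $n$. *)

(* Defs.v *)
From HB Require Import structures.
From mathcomp Require Import all_boot all_order all_algebra.
From mathcomp Require Import all_classical all_reals all_analysis.
From mathcomp Require Import complex.
Set Implicit Arguments. Unset Strict Implicit. Unset Printing Implicit Defensive.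
Import Order.TTheory GRing.Theory Num.Theory.
Local Open Scope classical_set_scope.
Local Open Scope ring_scope.

Section OPUC.
Variable R : realType.

(* Points of the plane R^2 = C carry the product (Borel) sigma-algebra. *)
Definition toC (p : R * R) : R[i] := Complex p.1 p.2.

Definition cabs (z : R[i]) : R := Num.sqrt (complex.Re z ^+ 2 + complex.Im z ^+ 2).
Definition pdist (p q : R * R) : R := cabs (toC p - toC q).

Definition unit_circle : set (R * R) := [set p | p.1 ^+ 2 + p.2 ^+ 2 = 1].

Definition msupp (mu : set (R * R) -> \bar R) : set (R * R) :=
  [set z | forall r : R, 0 < r -> (0 < mu [set w | (pdist w z < r)%R])%E].

Definition L2ip (mu : {measure set (R * R) -> \bar R}) (f g : {poly R[i]})
    : \bar R * \bar R :=
  ((\int[mu]_(z in unit_circle) (complex.Re (f.[toC z] * conjc g.[toC z]))%:E)%E,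
   (\int[mu]_(z in unit_circle) (complex.Im (f.[toC z] * conjc g.[toC z]))%:E)%E).

Definition monic_OP (mu : {measure set (R * R) -> \bar R}) (n : nat) (P : {poly R[i]}) :=
  [/\ P \is monic, size P = n.+1 &
      forall q : {poly R[i]}, (size q <= n)%N -> L2ip mu P q = (0%E, 0%E)].

(* n < N, where N = infinity if the support S is infinite, N = #S otherwise *)
Definition lt_N (S : set (R * R)) (n : nat) :=
  ~ finite_set S \/ exists s : seq (R * R), [/\ uniq s, [set` s] = S & (n < size s)%N].

Definition isolated_pt (S : set (R * R)) (z0 : R * R) :=
  S z0 /\ exists r : R, 0 < r /\ forall w, S w -> pdist w z0 < r -> w = z0.

Definition dist_rest (S : set (R * R)) (z0 : R * R) : R :=
  inf [set pdist w z0 | w in S `\ z0].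

End OPUC.

(* Main.v *)
Require Import Defs.
From HB Require Import structures.
From mathcomp Require Import all_boot all_order all_algebra.
From mathcomp Require Import all_classical all_reals all_analysis.
From mathcomp Require Import complex.
From mathcomp Require Import ring lra zify.
Import Order.TTheory GRing.Theory Num.Theory.
Set Implicit Arguments. Unset Strict Implicit.
Local Open Scope classical_set_scope.
Local Open Scope ring_scope.
Local Open Scope complex_scope.

Section Good.
Variable R : realType.
Variable mu : probability (R * R)%type R.

Local Notation T := (R * R)%type.
Local Notation CRe := (@complex.Re R).
Local Notation CIm := (@complex.Im R).
Local Notation circ := (@unit_circle R).

Definition good (F : T -> R[i]) :=
  [/\ measurable_fun setT (fun z => CRe (F z)),
      measurable_fun setT (fun z => CIm (F z)) &
      exists M : R, forall z, circ z -> `|CRe (F z)| <= M /\ `|CIm (F z)| <= M].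

Lemma good_cst c : good (fun _ => c).
Proof.
split; [exact: measurable_cst|exact: measurable_cst|].
by exists (`|CRe c| + `|CIm c|) => z _; split; rewrite ?lerDl ?lerDr.
Qed.

Lemma good_toC : good (@toC R).
Proof.
split; [exact: measurable_fst|exact: measurable_snd|].
exists 1 => [[x y]]; rewrite /circ /= => h; split.
- rewrite -(@ler_pXn2r _ 2) ?nnegrE //= ?normr_ge0 // expr1n real_normK ?num_real//.
  by rewrite -h lerDl sqr_ge0.
- rewrite -(@ler_pXn2r _ 2) ?nnegrE //= ?normr_ge0 // expr1n real_normK ?num_real//.
  by rewrite -h lerDr sqr_ge0.
Qed.

Lemma good_add F G : good F -> good G -> good (fun z => F z + G z).
Proof.
move=> [mF1 mF2 [M1 hM1]] [mG1 mG2 [M2 hM2]]; split.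
- have -> : (fun z => CRe (F z + G z)) = (fun z => CRe (F z)) \+ (fun z => CRe (G z)).
    by apply/funext => z /=; case: (F z) => ? ?; case: (G z) => ? ?.
  exact: measurable_realfun.measurable_funD.
- have -> : (fun z => CIm (F z + G z)) = (fun z => CIm (F z)) \+ (fun z => CIm (G z)).
    by apply/funext => z /=; case: (F z) => ? ?; case: (G z) => ? ?.
  exact: measurable_realfun.measurable_funD.
- exists (M1 + M2) => z hz; have [h1 h2] := hM1 z hz; have [h3 h4] := hM2 z hz.
  case: (F z) h1 h2 => a b; case: (G z) h3 h4 => c d /= h3 h4 h1 h2; split.
  + by apply: (le_trans (ler_normD _ _)); exact: lerD.
  + by apply: (le_trans (ler_normD _ _)); exact: lerD.
Qed.

Lemma good_opp F : good F -> good (fun z => - F z).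
Proof.
move=> [mF1 mF2 [M1 hM1]]; split.
- have -> : (fun z => CRe (- F z)) = (fun z => (-1) * CRe (F z)).
    by apply/funext => z /=; case: (F z) => ? ? /=; rewrite mulN1r.
  exact: measurable_realfun.measurable_funM.
- have -> : (fun z => CIm (- F z)) = (fun z => (-1) * CIm (F z)).
    by apply/funext => z /=; case: (F z) => ? ? /=; rewrite mulN1r.
  exact: measurable_realfun.measurable_funM.
- exists M1 => z hz; have [h1 h2] := hM1 z hz.
  by case: (F z) h1 h2 => a b /= h1 h2; rewrite !normrN.
Qed.

Lemma good_mul F G : good F -> good G -> good (fun z => F z * G z).
Proof.
move=> [mF1 mF2 [M1 hM1]] [mG1 mG2 [M2 hM2]]; split.
- have -> : (fun z => CRe (F z * G z)) =
     ((fun z => CRe (F z)) \* (fun z => CRe (G z))) \-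
     ((fun z => CIm (F z)) \* (fun z => CIm (G z))).
    by apply/funext => z /=; case: (F z) => ? ?; case: (G z) => ? ?.
  by apply: measurable_realfun.measurable_funB; apply: measurable_realfun.measurable_funM.
- have -> : (fun z => CIm (F z * G z)) =
     ((fun z => CRe (F z)) \* (fun z => CIm (G z))) \+
     ((fun z => CIm (F z)) \* (fun z => CRe (G z))).
    by apply/funext => z /=; case: (F z) => ? ?; case: (G z) => ? ?.
  by apply: measurable_realfun.measurable_funD; apply: measurable_realfun.measurable_funM.
- exists (M1 * M2 + M1 * M2) => z hz; have [h1 h2] := hM1 z hz; have [h3 h4] := hM2 z hz.
  case: (F z) h1 h2 => a b; case: (G z) h3 h4 => c d /= h3 h4 h1 h2; split.
  + apply: (le_trans (ler_normB _ _)); rewrite !normrM.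
    by apply: lerD; apply: ler_pM.
  + apply: (le_trans (ler_normD _ _)); rewrite !normrM.
    by apply: lerD; apply: ler_pM.
Qed.

Lemma good_conj F : good F -> good (fun z => conjc (F z)).
Proof.
move=> [mF1 mF2 [M1 hM1]]; split.
- have -> : (fun z => CRe (conjc (F z))) = (fun z => CRe (F z)).
    by apply/funext => z /=; case: (F z).
  exact: mF1.
- have -> : (fun z => CIm (conjc (F z))) = (fun z => (-1) * CIm (F z)).
    by apply/funext => z /=; case: (F z) => ? ? /=; rewrite mulN1r.
  exact: measurable_realfun.measurable_funM.
- exists M1 => z hz; have [h1 h2] := hM1 z hz.
  by case: (F z) h1 h2 => a b /= h1 h2; rewrite normrN.
Qed.

Lemma good_horner (p : {poly R[i]}) : good (fun z => p.[toC z]).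
Proof.
elim/poly_ind: p => [|p c IH].
  have -> : (fun z : T => (0 : {poly R[i]}).[toC z]) = (fun _ => 0).
    by apply/funext => z; rewrite horner0.
  exact: good_cst.
have -> : (fun z : T => (p * 'X + c%:P).[toC z]) = (fun z => p.[toC z] * toC z + c).
  by apply/funext => z; rewrite hornerMXaddC.
by apply: good_add; [apply: good_mul => //; exact: good_toC|exact: good_cst].
Qed.


Lemma meas_circle : measurable (circ).
Proof.
have mf : measurable_fun setT (fun p : T => p.1 * p.1 + p.2 * p.2).
  by apply: measurable_realfun.measurable_funD; apply: measurable_realfun.measurable_funM;
    (exact: measurable_fst || exact: measurable_snd).
have := mf measurableT [set 1] (measurable_set1 1); rewrite setTI.
by congr measurable; apply/funext => p /=; rewrite !expr2.
Qed.

Lemma bounded_int (g : T -> R) : measurable_fun setT g ->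
  (exists M, forall z, circ z -> `|g z| <= M) ->
  mu.-integrable circ (EFin \o g).
Proof.
move=> mg [M hM]; apply/integrableP; split.
  by apply/measurable_realfun.measurable_EFinP; apply: measurable_funS mg.
apply: (@le_lt_trans _ _ ((`|M| + 1)%:E * mu circ)%E).
  apply: (integral_le_bound (`|M| + 1)%:E) => //.
  - exact: meas_circle.
  - by apply/measurable_realfun.measurable_EFinP; apply: measurable_funS mg.
  - apply: aeW => z hz; rewrite /= lee_fin.
    by apply: (le_trans (hM z hz)); apply: (le_trans (ler_norm M)); rewrite lerDl.
apply: lte_mul_pinfty => //.
by rewrite (le_lt_trans (probability_le1 _ meas_circle)) ?ltry.
Qed.

Lemma good_intRe F : good F -> mu.-integrable circ (EFin \o (fun z => CRe (F z))).
Proof. by move=> [m1 m2 [M hM]]; apply: bounded_int => //; exists M => z /hM []. Qed.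
Lemma good_intIm F : good F -> mu.-integrable circ (EFin \o (fun z => CIm (F z))).
Proof. by move=> [m1 m2 [M hM]]; apply: bounded_int => //; exists M => z /hM []. Qed.

Definition Rint (g : T -> R) : R := Rintegral mu circ g.
Definition CI (F : T -> R[i]) : R[i] :=
  Complex (Rint (fun z => CRe (F z))) (Rint (fun z => CIm (F z))).

Lemma CI_add F G : good F -> good G -> CI (fun z => F z + G z) = CI F + CI G.
Proof.
move=> gF gG; rewrite /CI /Rint.
have -> : (fun z => CRe (F z + G z)) = (fun z => CRe (F z) + CRe (G z)).
  by apply/funext => z /=; case: (F z) => ? ?; case: (G z) => ? ?.
have -> : (fun z => CIm (F z + G z)) = (fun z => CIm (F z) + CIm (G z)).
  by apply/funext => z /=; case: (F z) => ? ?; case: (G z) => ? ?.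
rewrite !RintegralD //; try exact: meas_circle;
  try exact: good_intRe; try exact: good_intIm.
Qed.

Lemma Rint_scale (c : R) g : mu.-integrable circ (EFin \o g) ->
  Rint (fun z => c * g z) = c * Rint g.
Proof. by move=> ig; rewrite /Rint RintegralZl //; exact: meas_circle. Qed.

Lemma intZ (k : R) g : mu.-integrable circ (EFin \o g) ->
  mu.-integrable circ (EFin \o (fun z => k * g z)).
Proof.
move=> ig; have := @integrableZl _ _ _ mu _ meas_circle k _ ig; apply: (eq_integrable meas_circle) => z _ /=.
by rewrite EFinM.
Qed.

Lemma CI_scale c F : good F -> CI (fun z => c * F z) = c * CI F.
Proof.
move=> gF; rewrite /CI /Rint.
have -> : (fun z => CRe (c * F z)) = (fun z => CRe c * CRe (F z) - CIm c * CIm (F z)).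
  by apply/funext => z /=; case: (F z) => ? ?; case: c.
have -> : (fun z => CIm (c * F z)) = (fun z => CRe c * CIm (F z) + CIm c * CRe (F z)).
  by apply/funext => z /=; case: (F z) => ? ?; case: c.
have mc := meas_circle.
have iRe := good_intRe gF; have iIm := good_intIm gF.
rewrite RintegralB //; last 2 first.
- exact: intZ.
- exact: intZ.
rewrite RintegralD //; last 2 first.
- exact: intZ.
- exact: intZ.
rewrite !RintegralZl //.
by case: c => a b /=.
Qed.

Lemma CI_conj F : good F -> CI (fun z => conjc (F z)) = conjc (CI F).
Proof.
move=> gF; rewrite /CI.
have -> : (fun z => CRe (conjc (F z))) = (fun z => CRe (F z)).
  by apply/funext => z /=; case: (F z).
have -> : (fun z => CIm (conjc (F z))) = (fun z => (-1) * CIm (F z)).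
  by apply/funext => z /=; case: (F z) => ? ? /=; rewrite mulN1r.
by rewrite Rint_scale ?mulN1r //; exact: good_intIm.
Qed.


Definition ip (p q : {poly R[i]}) : R[i] :=
  CI (fun z => p.[toC z] * conjc q.[toC z]).

Lemma good_pq (p q : {poly R[i]}) : good (fun z => p.[toC z] * conjc q.[toC z]).
Proof. by apply: good_mul; [exact: good_horner|apply: good_conj; exact: good_horner]. Qed.

Lemma ipD (p1 p2 q : {poly R[i]}) : ip (p1 + p2) q = ip p1 q + ip p2 q.
Proof.
rewrite /ip -CI_add; try exact: good_pq.
by congr CI; apply/funext => z; rewrite hornerD mulrDl.
Qed.

Lemma ipZ c (p q : {poly R[i]}) : ip (c%:P * p) q = c * ip p q.
Proof.
rewrite /ip -CI_scale; last exact: good_pq.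
by congr CI; apply/funext => z; rewrite hornerM hornerC mulrA.
Qed.

Lemma ipN (p q : {poly R[i]}) : ip (- p) q = - ip p q.
Proof.
have -> : - p = (-1)%:P * p by rewrite polyCN mulN1r.
by rewrite ipZ mulN1r.
Qed.

Lemma ipB (p1 p2 q : {poly R[i]}) : ip (p1 - p2) q = ip p1 q - ip p2 q.
Proof. by rewrite ipD ipN. Qed.

Lemma ipC (p q : {poly R[i]}) : ip q p = conjc (ip p q).
Proof.
rewrite /ip -CI_conj; last exact: good_pq.
congr CI; apply/funext => z.
by rewrite rmorphM /= conjcK mulrC.
Qed.

Lemma ip_orth n P (q : {poly R[i]}) : monic_OP mu n P -> (size q <= n)%N -> ip P q = 0.
Proof.
move=> [_ _ /(_ q) h] /h; rewrite /L2ip => -[h1 h2].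
by rewrite /ip /CI /Rint /Rintegral h1 h2.
Qed.

Definition nsq (w : R[i]) : R := CRe w ^+ 2 + CIm w ^+ 2.

Lemma mulcJ_nsq (w : R[i]) : w * conjc w = (nsq w)%:C.
Proof.
case: w => a b; rewrite /nsq /=; apply/eqP; rewrite eq_complex /=; apply/andP; split;
  apply/eqP; rewrite ?expr2; ring.
Qed.

Lemma ip_self (p : {poly R[i]}) : ip p p = (Rint (fun z => nsq p.[toC z]))%:C.
Proof.
rewrite /ip /CI.
have -> : (fun z => CRe (p.[toC z] * conjc p.[toC z])) = (fun z => nsq p.[toC z]).
  by apply/funext => z; rewrite mulcJ_nsq.
have -> : (fun z => CIm (p.[toC z] * conjc p.[toC z])) = (fun z => 0 * 0).
  by apply/funext => z; rewrite mulcJ_nsq mulr0.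
by rewrite Rint_scale ?mul0r //; exact: (good_intRe (good_cst 0)).
Qed.

Lemma Rint_le (g1 g2 : T -> R) (N : set T) : measurable N -> mu N = 0%E ->
  mu.-integrable circ (EFin \o g1) -> mu.-integrable circ (EFin \o g2) ->
  (forall z, circ z -> ~ N z -> g1 z <= g2 z) -> Rint g1 <= Rint g2.
Proof.
move=> mN N0 i1 i2 h; rewrite /Rint /Rintegral.
rewrite (negligible_integral mN meas_circle i1 N0).
rewrite (negligible_integral mN meas_circle i2 N0).
have mD : measurable (circ `\` N) by apply: measurableD => //; exact: meas_circle.
have := @le_Rintegral _ _ _ mu (circ `\` N) g1 g2 mD.
rewrite /Rintegral; apply.
- by apply: integrableS i1 => //; exact: meas_circle.
- by apply: integrableS i2 => //; exact: meas_circle.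
- by move=> z [cz nz]; exact: h.
Qed.


Lemma cabs_ge0 (z : R[i]) : 0 <= cabs z.
Proof. exact: sqrtr_ge0. Qed.

Lemma cabsD (x y : R[i]) : cabs (x + y) <= cabs x + cabs y.
Proof. by case: x => a b; case: y => c e; exact: (@le_normcD R (a +i* b) (c +i* e)). Qed.

Lemma cabsM (x y : R[i]) : cabs (x * y) = cabs x * cabs y.
Proof. by case: x => a b; case: y => c e; exact: (@Normc.normcM R (a +i* b) (c +i* e)). Qed.

Lemma cabsN (x : R[i]) : cabs (- x) = cabs x.
Proof. by case: x => a b; rewrite /cabs /= !sqrrN. Qed.

Lemma cabsB (x y : R[i]) : cabs (x - y) = cabs (y - x).
Proof. by rewrite -cabsN opprB. Qed.

Lemma cabs_eq0 (x : R[i]) : cabs x = 0 -> x = 0.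
Proof. by case: x => a b; exact: (@Normc.eq0_normc R (a +i* b)). Qed.

Lemma cabs_sqr (x : R[i]) : cabs x ^+ 2 = nsq x.
Proof. by rewrite /cabs /nsq sqr_sqrtr // addr_ge0 // sqr_ge0. Qed.

Lemma Re_le_cabs (x : R[i]) : `|CRe x| <= cabs x.
Proof.
rewrite -(@ler_pXn2r _ 2) ?nnegrE ?normr_ge0 ?cabs_ge0 // real_normK ?num_real //.
by rewrite cabs_sqr /nsq lerDl sqr_ge0.
Qed.

Lemma Im_le_cabs (x : R[i]) : `|CIm x| <= cabs x.
Proof.
rewrite -(@ler_pXn2r _ 2) ?nnegrE ?normr_ge0 ?cabs_ge0 // real_normK ?num_real //.
by rewrite cabs_sqr /nsq lerDr sqr_ge0.
Qed.

Lemma cabs_le_ReIm (x : R[i]) : cabs x <= `|CRe x| + `|CIm x|.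
Proof.
rewrite -(@ler_pXn2r _ 2) ?nnegrE ?addr_ge0 ?normr_ge0 ?cabs_ge0 // cabs_sqr /nsq.
rewrite sqrrD -[CRe x ^+ 2]real_normK ?num_real // -[CIm x ^+ 2]real_normK ?num_real //.
by rewrite lerD2r lerDl mulrn_wge0 // mulr_ge0 // normr_ge0.
Qed.

Lemma cabs_conj (x : R[i]) : cabs (conjc x) = cabs x.
Proof. by case: x => a b; rewrite /cabs /= sqrrN. Qed.

Definition sqd (w z : T) : R := (w.1 - z.1) ^+ 2 + (w.2 - z.2) ^+ 2.

Lemma pdist_sqd (w z : T) : pdist w z = Num.sqrt (sqd w z).
Proof. by []. Qed.

Lemma sqd_ge0 (w z : T) : 0 <= sqd w z.
Proof. by rewrite addr_ge0 // sqr_ge0. Qed.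

Lemma pdist_sym (w z : T) : pdist w z = pdist z w.
Proof. by rewrite /pdist cabsB. Qed.

Lemma pdist_tri (u v w : T) : pdist u w <= pdist u v + pdist v w.
Proof.
rewrite /pdist; have -> : toC u - toC w = (toC u - toC v) + (toC v - toC w).
  by rewrite addrA subrK.
exact: cabsD.
Qed.

Lemma pdist_ge0 (w z : T) : 0 <= pdist w z.
Proof. exact: cabs_ge0. Qed.

Lemma meas_sqd (z : T) : measurable_fun setT (fun w : T => sqd w z).
Proof.
rewrite /sqd; apply: measurable_realfun.measurable_funD;
  apply: measurable_realfun.measurable_funX;
  apply: measurable_realfun.measurable_funB => //;
  (exact: measurable_fst || exact: measurable_snd).
Qed.

Lemma disk_eq (z : T) (r : R) : 0 < r ->
  [set w | pdist w z < r] = (fun w => sqd w z) @^-1` `]-oo, r ^+ 2[.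
Proof.
move=> r0; apply/funext => w /=; apply/propext.
rewrite in_itv /= pdist_sqd -[X in _ < X](gtr0_norm r0) -sqrtr_sqr ltr_sqrt ?exprn_gt0 //.
Qed.

Lemma meas_disk (z : T) (r : R) : measurable [set w : T | pdist w z < r].
Proof.
case: (ltP 0 r) => r0.
  rewrite disk_eq //; have := meas_sqd z measurableT (measurable_itv `]-oo, r ^+ 2[).
  by rewrite setTI.
have -> : [set w : T | pdist w z < r] = set0.
  apply/funext => w /=; apply/propext; split => // h.
  by have := le_lt_trans (pdist_ge0 w z) (lt_le_trans h r0); rewrite ltxx.
exact: measurable0.
Qed.


Lemma mu_mono (A B : set T) : measurable A -> measurable B -> A `<=` B -> (mu A <= mu B)%E.
Proof. by move=> mA mB AB; apply: le_measure => //; rewrite inE. Qed.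

Lemma mu_ge0' (A : set T) : (0 <= mu A)%E.
Proof. exact: measure_ge0. Qed.

Lemma toC_inj : injective (@toC R).
Proof. by move=> [a b] [c e] [-> ->]. Qed.

Lemma nonroot_in_seq (h : {poly R[i]}) (s : seq T) : h != 0 -> uniq s ->
  (size h <= size s)%N -> exists2 w, w \in s & h.[toC w] != 0.
Proof.
move=> h0 us hs; apply: contrapT => nex.
have all_r : all (root h) (map (@toC R) s).
  apply/allP => x /mapP [w ws ->]; rewrite /root; apply/negPn/negP => nr.
  by apply: nex; exists w.
have := max_poly_roots h0 all_r; rewrite (map_inj_uniq toC_inj) us size_map.
by move=> /(_ isT); rewrite ltnNge hs.
Qed.

Lemma nonroot_supp n (h : {poly R[i]}) : h != 0 -> (size h <= n)%N ->
  lt_N (msupp mu) n -> exists2 w, msupp mu w & h.[toC w] != 0.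
Proof.
move=> h0 hn [inf|[s [us es ns]]].
  have [B BS nB] := infinite_set_fset n inf.
  have [w wB hw] := nonroot_in_seq h0 (finmap.fset_uniq B) (leq_trans hn nB).
  by exists w => //; apply: BS.
have [w ws hw] := nonroot_in_seq h0 us (leq_trans hn (ltnW ns)).
by exists w => //; rewrite -es.
Qed.

Lemma poly_cont (p : {poly R[i]}) (w : R[i]) (e : R) : 0 < e ->
  exists2 del : R, 0 < del & forall z, cabs (z - w) < del -> cabs (p.[z] - p.[w]) < e.
Proof.
elim/poly_ind: p e => [|p c IH] e e0.
  by exists 1 => // z _; rewrite !horner0 subrr /cabs /= expr0n /= addr0 sqrtr0.
set B := cabs w + 1; set K := cabs p.[w].
have B0 : 0 < B by rewrite ltr_pwDr // cabs_ge0.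
have K0 : 0 <= K by exact: cabs_ge0.
have [d1 d10 hd1] := IH (e / (2 * B)) (divr_gt0 e0 (mulr_gt0 (ltr0Sn _ 1) B0)).
have d20 : 0 < e / (2 * (K + 1)) by rewrite divr_gt0 // mulr_gt0 // ltr_pwDr.
exists (Num.min (Num.min d1 1) (e / (2 * (K + 1)))).
  by rewrite !lt_min d10 ltr01 d20.
move=> z; rewrite !lt_min => /andP[/andP[hz1 hz2] hz3].
rewrite !hornerMXaddC.
have -> : p.[z] * z + c - (p.[w] * w + c) = (p.[z] - p.[w]) * z + p.[w] * (z - w).
  by ring.
apply: (le_lt_trans (cabsD _ _)); rewrite !cabsM.
have cz : cabs z <= B.
  rewrite /B; have := cabsD (z - w) w; rewrite subrK => h.
  apply: (le_trans h); rewrite addrC lerD2l; exact: ltW.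
have h1 : cabs (p.[z] - p.[w]) * cabs z <= e / (2 * B) * B.
  apply: ler_pM; [exact: cabs_ge0|exact: cabs_ge0| |exact: cz].
  exact: ltW (hd1 _ hz1).
have h2 : K * cabs (z - w) <= K * (e / (2 * (K + 1))).
  by apply: ler_wpM2l => //; exact: ltW.
have h3 : e / (2 * B) * B = e / 2.
  by field; rewrite gt_eqF.
have h4 : K * (e / (2 * (K + 1))) < e / 2.
  have K1 : 0 < K + 1 by rewrite ltr_pwDr.
  have -> : K * (e / (2 * (K + 1))) = e / 2 * (K / (K + 1)).
    by field; rewrite gt_eqF.
  rewrite -[X in _ < X]mulr1 ltr_pM2l ?divr_gt0 // ltr_pdivrMr // mul1r ltrDl ltr01 //.
move: h1; rewrite h3 => h1; rewrite /K in h2 h4.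
have : cabs (p.[z] - p.[w]) * cabs z + cabs p.[w] * cabs (z - w) <= e / 2 + cabs p.[w] * (e / (2 * (cabs p.[w] + 1))).
  exact: lerD.
move=> h5; apply: (le_lt_trans h5).
by rewrite [X in _ < X](splitr e) ltrD2l.
Qed.

Section WithCirc.
Hypothesis hcirc : mu circ = 1%E.

Lemma notcirc0 : mu (~` circ) = 0%E.
Proof. by rewrite probability_setC ?hcirc ?subee //; exact: meas_circle. Qed.

Lemma circ_sqrt (w : T) : circ w -> cabs (toC w) = 1.
Proof. by rewrite /unit_circle /cabs /= => ->; rewrite sqrtr1. Qed.

Lemma supp_circ (z : T) : msupp mu z -> circ z.
Proof.
move=> hz; apply: contrapT => nz.
set s := cabs (toC z).
have s1 : s != 1.
  apply/eqP => h; apply: nz; rewrite /unit_circle.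
  have := cabs_sqr (toC z); rewrite -/s h expr1n /nsq /= => <-; by [].
have rho0 : 0 < `|s - 1| by rewrite normr_gt0 subr_eq0.
have := hz _ rho0.
have -> : mu [set w | pdist w z < `|s - 1|] = 0%E.
  apply/eqP; rewrite eq_le mu_ge0' andbT -notcirc0.
  apply: mu_mono; [exact: meas_disk|apply: measurableC; exact: meas_circle|].
  move=> w /= hw cw; move: hw; rewrite /pdist.
  have hw1 := circ_sqrt cw.
  have t1 : s <= cabs (toC z - toC w) + 1.
    by rewrite -hw1 /s; have := cabsD (toC z - toC w) (toC w); rewrite subrK.
  have t2 : 1 <= cabs (toC w - toC z) + s.
    by rewrite -hw1 /s; have := cabsD (toC w - toC z) (toC z); rewrite subrK.
  rewrite cabsB in t1.
  have key : `|s - 1| <= cabs (toC w - toC z).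
    rewrite ler_norml; apply/andP; split.
      by rewrite lerNl opprB lerBlDr.
    by rewrite lerBlDr.
  by move=> h; have := lt_le_trans h key; rewrite ltxx.
by rewrite ltxx.
Qed.


Variable z0 : T.
Local Notation dd := (dist_rest (msupp mu) z0).

Lemma dd_lb (w : T) : msupp mu w -> w <> z0 -> dd <= pdist w z0.
Proof.
move=> sw wz; rewrite /dist_rest; apply: ge_inf.
  by exists 0 => x [v _ <-]; exact: pdist_ge0.
by exists w => //; split => //= /eqP; rewrite eq_sym => /eqP.
Qed.

Lemma dd_ge0 : 0 <= dd.
Proof.
rewrite /dist_rest.
case: (pselect ([set pdist w z0 | w in msupp mu `\ z0] !=set0)) => [ne|e].
  apply: lb_le_inf => //.
  by move=> y [v _ <-]; exact: pdist_ge0.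
have -> : [set pdist w z0 | w in msupp mu `\ z0] = set0.
  by apply/seteqP; split => // y Ey; apply: e; exists y.
by rewrite inf0.
Qed.

Definition ann := circ `&` ((fun w => sqd w z0) @^-1` `]0, dd ^+ 2[).

Lemma meas_ann : measurable ann.
Proof.
apply: measurableI; first exact: meas_circle.
by have := meas_sqd z0 measurableT (measurable_itv `]0, dd ^+ 2[); rewrite setTI.
Qed.

Definition rdisk (x : rat * rat * rat) : set T :=
  [set v | pdist v (ratr x.1.1, ratr x.1.2) < ratr x.2].

Definition Ek (k : nat) : set T :=
  match (unpickle k : option (rat * rat * rat)) with
  | Some x => if mu (rdisk x) == 0%E then rdisk x else set0
  | None => set0
  end.

Lemma Ek_negl k : mu.-negligible (Ek k).
Proof.
rewrite /Ek; case: (unpickle k) => [x|]; last exact: negligible_set0.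
case: eqP => [h|_]; last exact: negligible_set0.
by exists (rdisk x); split => //; exact: meas_disk.
Qed.

Lemma ann_cover : ann `<=` \bigcup_k Ek k.
Proof.
move=> w [cw]; rewrite /= in_itv /= => /andP[s0 s1].
have dd0 : 0 < dd ^+ 2 by exact: lt_trans s1.
have pw : pdist w z0 < dd.
  rewrite pdist_sqd -[X in _ < X](@ger0_norm _ dd) ?dd_ge0 // -sqrtr_sqr ltr_sqrt //.
have wz : w <> z0 by move=> ew; move: s0; rewrite ew /sqd !subrr expr0n /= addr0 ltxx.
have nsw : ~ msupp mu w.
  by move=> sw; have := le_lt_trans (dd_lb sw wz) pw; rewrite ltxx.
move: nsw; rewrite /msupp /= => /existsNP [r /not_implyP [r0 hr]].
have mr : mu [set v | pdist v w < r] = 0%E.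
  by apply/eqP; rewrite eq_le mu_ge0' andbT leNgt; apply/negP.
have r8 : 0 < r / 8 by rewrite divr_gt0.
have h1 : w.1 - r / 8 < w.1 + r / 8 by lra.
have [q1] := rat_in_itvoo h1.
rewrite in_itv /= => /andP[q1a q1b].
have h2 : w.2 - r / 8 < w.2 + r / 8 by lra.
have [q2] := rat_in_itvoo h2.
rewrite in_itv /= => /andP[q2a q2b].
have r42 : r / 4 < r / 2 by lra.
have [t] := rat_in_itvoo r42.
rewrite in_itv /= => /andP[ta tb].
pose x : rat * rat * rat := (q1, q2, t).
have dq : pdist (ratr q1, ratr q2) w < r / 4.
  apply: (le_lt_trans (cabs_le_ReIm _)) => /=.
  have e1 : `|ratr q1 - w.1| < r / 8 by rewrite ltr_norml; apply/andP; split; lra.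
  have e2 : `|ratr q2 - w.2| < r / 8 by rewrite ltr_norml; apply/andP; split; lra.
  lra.
have hk : unpickle (pickle x) = Some x := pickleK x.
move: (pickle x) hk => k hk.
exists k; first by [].
rewrite /Ek hk.
have sub : rdisk x `<=` [set v | pdist v w < r].
  move=> v; rewrite /rdisk /= => hv.
  apply: (le_lt_trans (pdist_tri v (ratr q1, ratr q2) w)).
  have := pdist_ge0 v w; lra.
have -> : mu (rdisk x) == 0%E.
  rewrite eq_le mu_ge0' andbT -mr; apply: mu_mono => //; exact: meas_disk.
by rewrite /rdisk /= pdist_sym; lra.
Qed.

Lemma null_ann : mu ann = 0%E.
Proof.
have [M [mM M0 sM]] := negligible_bigcup Ek_negl.
apply/eqP; rewrite eq_le mu_ge0' andbT -M0; apply: mu_mono => //.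
  exact: meas_ann.
exact: subset_trans ann_cover sM.
Qed.

Lemma nsq_ge0 (x : R[i]) : 0 <= nsq x.
Proof. by rewrite addr_ge0 // sqr_ge0. Qed.

Lemma nsq_fun (h : {poly R[i]}) :
  (fun z : T => nsq h.[toC z]) = (fun z => CRe (h.[toC z] * conjc h.[toC z])).
Proof. by apply/funext => z; rewrite mulcJ_nsq. Qed.

Lemma meas_nsq (h : {poly R[i]}) : measurable_fun setT (fun z : T => nsq h.[toC z]).
Proof. by rewrite nsq_fun; have [] := good_pq h h. Qed.

Lemma int_nsq (h : {poly R[i]}) : mu.-integrable circ (EFin \o (fun z : T => nsq h.[toC z])).
Proof. by rewrite nsq_fun; exact: (good_intRe (good_pq h h)). Qed.

Lemma PL n (h : {poly R[i]}) : h != 0 -> (size h <= n)%N -> lt_N (msupp mu) n ->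
  0 < Rint (fun z => nsq h.[toC z]).
Proof.
move=> h0 hn hN.
have [w sw hw] := nonroot_supp h0 hn hN.
set a := cabs h.[toC w].
have a0 : 0 < a.
  rewrite lt_neqAle cabs_ge0 andbT; apply/eqP => /esym /cabs_eq0 e.
  by move: hw; rewrite e eqxx.
have [del del0 hdel] := poly_cont h (toC w) (divr_gt0 a0 (ltr0Sn _ 1)).
have lb : forall z, pdist z w < del -> a ^+ 2 / 4 <= nsq h.[toC z].
  move=> z hz; have := hdel (toC z) hz => hc.
  have t : a <= cabs (h.[toC z] - h.[toC w]) + cabs h.[toC z].
    rewrite /a cabsB; have := cabsD (h.[toC w] - h.[toC z]) h.[toC z].
    by rewrite subrK.
  have cz0 := cabs_ge0 h.[toC z].
  rewrite -cabs_sqr.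
  have hh : a / 2 <= cabs h.[toC z] by lra.
  nra.
set D := [set z : T | pdist z w < del].
have mD : measurable D := meas_disk w del.
have mc := meas_circle.
have muD : (0 < mu D)%E := sw del del0.
have mI : measurable (D `&` circ) by exact: measurableI.
have eqD : mu (D `&` circ) = mu D.
  have hU : D = (D `&` circ) `|` (D `&` ~` circ) by rewrite -setIUr setUCr setIT.
  have disj : (D `&` circ) `&` (D `&` ~` circ) = set0.
    by apply/seteqP; split => // x [[_ p] [_ q]].
  have m2 : measurable (D `&` ~` circ) by apply: measurableI => //; exact: measurableC.
  have m0 : mu (D `&` ~` circ) = 0%E.
    apply/eqP; rewrite eq_le mu_ge0' andbT -notcirc0.
    by apply: mu_mono m2 (measurableC mc) _; exact: subIsetr.
  have hsum : mu ((D `&` circ) `|` (D `&` ~` circ)) = (mu (D `&` circ) + mu (D `&` ~` circ))%E := measureU mu mI m2 disj.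
  rewrite -hU m0 adde0 in hsum.
  by rewrite hsum.
have step1 : (\int[mu]_(x in D `&` circ) (cst (a ^+ 2 / 4)%:E) x <=
              \int[mu]_(x in D `&` circ) (nsq h.[toC x])%:E)%E.
  apply: ge0_le_integral => //.
  - by move=> x _; rewrite /= lee_fin divr_ge0 // sqr_ge0.
  - by apply/measurable_realfun.measurable_EFinP; apply: measurable_funS (meas_nsq h).
  - by move=> x [hx _]; rewrite /= lee_fin; exact: lb.
have step2 : (\int[mu]_(x in D `&` circ) (nsq h.[toC x])%:E <=
              \int[mu]_(x in circ) (nsq h.[toC x])%:E)%E.
  apply: ge0_subset_integral => //.
  - by apply/measurable_realfun.measurable_EFinP; apply: measurable_funS (meas_nsq h).
  - by move=> x _; rewrite lee_fin nsq_ge0.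
rewrite integral_cst // in step1.
have pos : (0 < (a ^+ 2 / 4)%:E * mu (D `&` circ))%E.
  by rewrite eqD; apply: mule_gt0 => //; rewrite lte_fin divr_gt0 // exprn_gt0.
have fin := integrable_fin_num mc (int_nsq h).
rewrite /Rint /Rintegral -lte_fin fineK //.
exact: (lt_le_trans pos (le_trans step1 step2)).
Qed.

Local Notation c0 := (toC z0).
Definition Up : {poly R[i]} := 'X - c0%:P.

Lemma nsqM (x y : R[i]) : nsq (x * y) = nsq x * nsq y.
Proof. by rewrite -!cabs_sqr cabsM exprMn. Qed.

Lemma nsq_U (z : T) : nsq (toC z - c0) = sqd z z0.
Proof. by []. Qed.

Lemma circ_id (z : T) : circ z -> circ z0 ->
  CRe (conjc c0 * (toC z - c0)) = - sqd z z0 / 2.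
Proof.
rewrite /unit_circle /sqd; case: z => x y; case: z0 => x0 y0 /= h h0.
have e : (x - x0) ^+ 2 + (y - y0) ^+ 2 = (x ^+ 2 + y ^+ 2) + (x0 ^+ 2 + y0 ^+ 2) - 2 * (x0 * x + y0 * y).
  by ring.
have e2 : x0 * (x - x0) - - y0 * (y - y0) = (x0 * x + y0 * y) - (x0 ^+ 2 + y0 ^+ 2) by ring.
rewrite e h e2 h0; by field.
Qed.

Lemma ReM_real (x : R[i]) (k : R) : CRe (x * k%:C) = CRe x * k.
Proof. by case: x => a b /=; rewrite mulr0 subr0. Qed.

Lemma key_fun (f : {poly R[i]}) :
  (fun z : T => CRe (conjc c0 * ((Up * f).[toC z] * conjc f.[toC z]))) =
  (fun z : T => CRe (conjc c0 * (toC z - c0)) * nsq f.[toC z]).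
Proof.
apply/funext => z; rewrite hornerM /Up hornerXsubC -mulrA mulcJ_nsq mulrA.
exact: ReM_real.
Qed.

Lemma ReKEY (f : {poly R[i]}) : CRe (conjc c0 * ip (Up * f) f) =
  Rint (fun z => CRe (conjc c0 * (toC z - c0)) * nsq f.[toC z]).
Proof.
rewrite /ip -CI_scale; last exact: good_pq.
by rewrite -key_fun.
Qed.

Lemma int_key (f : {poly R[i]}) :
  mu.-integrable circ (EFin \o (fun z => CRe (conjc c0 * (toC z - c0)) * nsq f.[toC z])).
Proof.
rewrite -key_fun; apply: (good_intRe (F := fun z => conjc c0 * ((Up * f).[toC z] * conjc f.[toC z]))).
by apply: good_mul; [exact: good_cst|exact: good_pq].
Qed.

Lemma I1 (r : {poly R[i]}) : circ z0 ->
  CRe (conjc c0 * ip (Up * (Up * r)) (Up * r)) <=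
  - (dd ^+ 2 / 2) * Rint (fun z => nsq (Up * r).[toC z]).
Proof.
move=> hz0; rewrite ReKEY -Rint_scale; last exact: int_nsq.
apply: (Rint_le meas_ann null_ann (int_key _)).
  exact: intZ (int_nsq _).
move=> z cz nz; rewrite circ_id //.
rewrite hornerM /Up hornerXsubC nsqM nsq_U.
have s0 := sqd_ge0 z z0.
have nr := nsq_ge0 r.[toC z].
have hs : sqd z z0 = 0 \/ dd ^+ 2 <= sqd z z0.
  case: (lerP (dd ^+ 2) (sqd z z0)) => h; first by right.
  left; apply/eqP; rewrite eq_le s0 andbT leNgt; apply/negP => h0.
  by apply: nz; split => //=; rewrite in_itv /= h0 h.
case: hs => [hq|h]; first by rewrite hq !mul0r !mulr0.
have h2 : dd ^+ 2 * sqd z z0 <= sqd z z0 * sqd z z0 by apply: ler_wpM2r.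
have h3 : dd ^+ 2 * sqd z z0 * nsq r.[toC z] <= sqd z z0 * sqd z z0 * nsq r.[toC z].
  by apply: ler_wpM2r.
nra.
Qed.

Lemma I2 (w : {poly R[i]}) : circ z0 ->
  CRe (conjc c0 * ip (Up * w) w) <= 0.
Proof.
move=> hz0; rewrite ReKEY.
have -> : 0 = Rint (fun z => 0 * 0) by rewrite Rint_scale ?mul0r //; exact: (good_intRe (good_cst 0)).
apply: (Rint_le measurable0 (measure0 mu) (int_key _)).
  exact: intZ (good_intRe (good_cst 0)).
move=> z cz _; rewrite circ_id // mul0r.
have s0 := sqd_ge0 z z0; have nr := nsq_ge0 w.[toC z].
nra.
Qed.

Lemma ReB (x y : R[i]) : CRe (x - y) = CRe x - CRe y.
Proof. by case: x => ? ?; case: y => ? ?. Qed.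


Lemma main_core n (P : {poly R[i]}) (a b : R[i]) :
  circ z0 -> lt_N (msupp mu) n -> monic_OP mu n P ->
  cabs (a - c0) < dd ^+ 2 / 4 -> cabs (b - c0) < dd ^+ 2 / 4 ->
  ~ (exists r, P = r * (('X - a%:P) * ('X - b%:P))).
Proof.
move=> hz0 hN hOP ha hb [r hr].
have P0 : P != 0 by case: hOP => /monic_neq0.
have r0 : r != 0 by apply: contraNneq P0 => r0; rewrite hr r0 mul0r.
have Up0 : Up != 0 by rewrite -size_poly_gt0 /Up size_XsubC.
have sP : size P = n.+1 by case: hOP.
have sQ : size (('X - a%:P) * ('X - b%:P)) = 3%N.
  by rewrite size_mul ?size_XsubC // -size_poly_gt0 size_XsubC.
have sr : size r = n.-1.
  move: sP; rewrite hr size_mul ?sQ; last by rewrite -size_poly_gt0 sQ.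
    rewrite -!subn1 => h; move: h; set k := size r; move=> h; lia.
  exact: r0.
have srn : (size r <= n)%N by rewrite sr leq_pred.
set e2 := Up * r.
have se2 : (size e2 <= n)%N.
  have n1 : (0 < n)%N.
    case: (n) sr => [|k] // h; move: r0; rewrite -size_poly_eq0 h /=.
    by [].
  rewrite /e2 size_mul // /Up size_XsubC sr.
  move: n1; rewrite -!subn1; lia.
set al := a - c0; set be := b - c0.
have iden : Up * e2 = P + (al + be)%:P * e2 - (al * be)%:P * r.
  rewrite hr /e2 /Up /al /be !(polyCD, polyCN, polyCM); ring.
have e20 : e2 != 0 by rewrite /e2 mulf_neq0.
set G2 := Rint (fun z => nsq e2.[toC z]).
have G2pos : 0 < G2 := PL e20 se2 hN.
have ip22 : ip e2 e2 = G2%:C := ip_self e2.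
set m := ip r e2.
have X_eq : ip (Up * e2) e2 = (al + be) * G2%:C - (al * be) * m.
  by rewrite iden ipB ipD (ip_orth hOP se2) add0r !ipZ ip22.
have G2c : G2%:C != 0 :> R[i].
  by apply/eqP => /complexI /eqP; rewrite gt_eqF.
set s := m / G2%:C.
set w := r - s%:P * e2.
have sw : (size w <= n)%N.
  apply: (leq_trans (size_polyD _ _)); rewrite geq_max srn size_polyN.
  apply: (leq_trans (size_polyMleq _ _)).
  have := size_polyC_leq1 s; move: se2; rewrite -subn1.
  set k := size e2; set j := size s%:P; lia.
have w0 : w != 0.
  have -> : w = (1 - s%:P * Up) * r by rewrite /w /e2; ring.
  rewrite mulf_neq0 //; apply/eqP => /(congr1 (fun p => p.[c0])).
  rewrite hornerD hornerN hornerM /Up hornerXsubC subrr mulr0 subr0 hornerC horner0 => /eqP.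
  by rewrite oner_eq0.
have iwe : ip w e2 = 0.
  by rewrite /w ipB ipZ ip22 /s divfK // subrr.
have iew : ip e2 w = 0 by rewrite ipC iwe rmorph0.
set Gw := Rint (fun z => nsq w.[toC z]).
have Gwpos : 0 < Gw := PL w0 sw hN.
have ipww : ip w w = Gw%:C := ip_self w.
have irw : ip r w = Gw%:C.
  have -> : r = w + s%:P * e2 by rewrite /w subrK.
  by rewrite ipD ipZ iew mulr0 addr0 ipww.
have Y_eq : ip (Up * w) w = s * (al * be) * Gw%:C.
  have -> : Up * w = e2 - s%:P * (Up * e2) by rewrite /w /e2; ring.
  rewrite ipB ipZ iew iden ipB ipD (ip_orth hOP sw) !ipZ iew irw.
  by ring.
have h1 := I1 r hz0; rewrite -/e2 -/G2 X_eq in h1.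
have h2 := I2 w hz0; rewrite Y_eq in h2.
set K := conjc c0 * m * (al * be).
have eY : conjc c0 * (s * (al * be) * Gw%:C) = K * (Gw / G2)%:C.
  rewrite /K /s rmorphM /= fmorphV /=; ring.
rewrite eY ReM_real in h2.
have q0 : 0 < Gw / G2 by rewrite divr_gt0.
have K0 : CRe K <= 0 by nra.
have eX : conjc c0 * ((al + be) * G2%:C - al * be * m) = (conjc c0 * (al + be)) * G2%:C - K.
  by rewrite /K; ring.
rewrite eX ReB ReM_real in h1.
set t := CRe (conjc c0 * (al + be)) in h1.
have tlb : - (cabs al + cabs be) <= t.
  have := Re_le_cabs (conjc c0 * (al + be)); rewrite ler_norml => /andP[h _].
  apply: le_trans h; rewrite lerN2 cabsM cabs_conj circ_sqrt // mul1r.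
  exact: cabsD.
have tD : 0 < t + dd ^+ 2 / 2 by lra.
have := mulr_gt0 tD G2pos.
lra.
Qed.

End WithCirc.


End Good.

Local Close Scope complex_scope.
Unset Implicit Arguments.

Theorem theoremA2p5 (R : realType) (mu : probability (R * R)%type R)
  (z0 : R * R) (n : nat) (P : {poly R[i]}) :
  mu (@unit_circle R) = 1%E ->
  isolated_pt (msupp mu) z0 ->
  lt_N (msupp mu) n ->
  monic_OP mu n P ->
  let d := dist_rest (msupp mu) z0 in
  forall a b : R[i],
    cabs (a - toC z0) < d ^+ 2 / 4 ->
    cabs (b - toC z0) < d ^+ 2 / 4 ->
    ~~ (('X - a%:P) * ('X - b%:P) %| P).
Proof.
move=> hcirc hiso hN hOP d a b ha hb.
apply/negP => /dvdpP [r hr].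
have hz0 : @unit_circle R z0 := supp_circ hcirc (proj1 hiso).
exact: (main_core hcirc hz0 hN hOP ha hb (ex_intro _ r hr)).
Qed.
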